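(* Consider Bertrand Competition with $n\ge 2$ firms, integer price floor $L\ge 2$ and integer reservation value $H>L$: each firm chooses an integer price in $\{L,\dots,H\}$; the firms choosing the lowest price $s$ split the sales equally, each such firm receiving $s/k$ where $k$ is the number of firms choosing $s$, and all other firms receive $0$. Cooperation means choosing $H$. Let $\beta\in[0,1]$ and $t\ge 0$, and define $f(n)=\sum_{k=0}^{n-1}\beta^k(1-\beta)^{n-1-k}\binom{n-1}{k}\frac{1}{n-k}$. Then cooperation for firm $i$ is consistent with type $(t,\beta)$ if and only if $$t\ \ge\ \max\big(\beta^{n-1}(H-1),\, f(n)L\big)-\beta^{n-1}H/n.$$
   Context: A pure strategy $s_i$ is consistent with a tolerance $t\ge 0$ and a mixed strategy profile $\sigma_{-i}$ of the other players if $u_i(s_i',\sigma_{-i})\le u_i(s_i,\sigma_{-i})+t$ for every pure strategy $s_i'$ of player $i$ (utilities extended by linearity). Cooperation is consistent with type $(t,\beta)$ for player $i$ if cooperation is consistent with $t$ and the profile $\sigma_{-i}$ in which each other firm independently plays $H$ (cooperation) with probability $\beta$ and $L$ (its Nash equilibrium action) with probability $1-\beta$. *)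

(* Defs.v *)
From HB Require Import structures.
From mathcomp Require Import all_boot all_order all_algebra.
Set Implicit Arguments. Unset Strict Implicit. Unset Printing Implicit Defensive.
Import Order.TTheory GRing.Theory Num.Theory.
Local Open Scope ring_scope.

(* Bertrand competition: n firms, prices are naturals p : 'I_H.+1 (so p <= H);
   the admissible prices are those with L <= p. A pure profile is
   s : {ffun 'I_n -> 'I_H.+1}. *)

Definition bertrand_u (R : realFieldType) (n H : nat) (i : 'I_n)
    (s : {ffun 'I_n -> 'I_H.+1}) : R :=
  if [forall j, (s i <= s j)%N]
  then (nat_of_ord (s i))%:R / (#|[set j | s j == s i]|)%:R
  else 0.

Arguments bertrand_u R {n H} i s.

Definition bertrand_EU (R : realFieldType) (n H : nat) (i : 'I_n)
    (p : 'I_H.+1) (sigma : 'I_n -> 'I_H.+1 -> R) : R :=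
  \sum_(s : {ffun 'I_n -> 'I_H.+1} | s i == p)
     (\prod_(j | j != i) sigma j (s j)) * bertrand_u R i s.

Definition consistent (R : realFieldType) (n L H : nat) (t : R) (i : 'I_n)
    (p : 'I_H.+1) (sigma : 'I_n -> 'I_H.+1 -> R) : Prop :=
  forall p' : 'I_H.+1, (L <= p')%N ->
    bertrand_EU i p' sigma <= bertrand_EU i p sigma + t.

Definition beta_profile (R : realFieldType) (n L H : nat) (beta : R)
    : 'I_n -> 'I_H.+1 -> R :=
  fun _ q => if nat_of_ord q == H then beta
             else if nat_of_ord q == L then 1 - beta else 0.

Definition coop_consistent (R : realFieldType) (n L H : nat) (i : 'I_n)
    (t beta : R) : Prop :=
  @consistent R n L H t i (@ord_max H) (@beta_profile R n L H beta).

Definition f_n (R : realFieldType) (n : nat) (beta : R) : R :=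
  \sum_(k < n) beta ^+ k * (1 - beta) ^+ (n.-1 - k) * ('C(n.-1, k))%:R
                 / (n - k)%:R.

(* Main.v *)
Require Import Defs.
From HB Require Import structures.
From mathcomp Require Import all_boot all_order all_algebra.
From mathcomp Require Import zify ring lra.
Import Order.TTheory GRing.Theory Num.Theory.
Local Open Scope ring_scope.

Lemma addsub (a b m : nat) : (a + b)%N = m -> b = (m - a)%N.
Proof. by move=> <-; rewrite addKn. Qed.

Lemma w_ge0 (R : realFieldType) n L H (beta : R) j q :
  0 <= beta -> beta <= 1 -> 0 <= @beta_profile R n L H beta j q.
Proof.
move=> b0 b1; rewrite /beta_profile; case: ifP => _ //; case: ifP => _ //.
by rewrite subr_ge0.
Qed.

Lemma u_ge0 (R : realFieldType) n H (i : 'I_n) (s : {ffun 'I_n -> 'I_H.+1}) :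
  0 <= bertrand_u R i s.
Proof. by rewrite /bertrand_u; case: ifP => // _; rewrite divr_ge0 ?ler0n. Qed.

Lemma EU_H (R : realFieldType) n L H (i : 'I_n) (beta : R) : (L < H)%N ->
  bertrand_EU i (@ord_max H) (@beta_profile R n L H beta)
  = beta ^+ n.-1 * H%:R / n%:R.
Proof.
move=> LH.
rewrite /bertrand_EU (bigD1 [ffun=> ord_max]) /=; last by rewrite ffunE.
rewrite [X in _ + X]big1 ?addr0.
  rewrite /bertrand_u ifT; last by apply/forallP => j; rewrite !ffunE.
  rewrite (eq_bigr (fun _ => beta)); last first.
    by move=> j _; rewrite ffunE /beta_profile /= eqxx.
  rewrite (prodr_const (predC1 i)) cardC1 card_ord.
  rewrite (_ : [set j | _] = setT); last by apply/setP => j; rewrite !inE !ffunE eqxx.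
  by rewrite cardsT card_ord ffunE mulrA.
move=> s /andP [/eqP si sne].
rewrite /bertrand_u; case: ifP; last by rewrite mulr0.
move=> /forallP hmin; exfalso; apply/negP: sne; rewrite negbK.
apply/eqP/ffunP => j; rewrite ffunE; apply/val_inj/eqP => /=.
have := hmin j; rewrite si /= => h.
by rewrite eqn_leq h -ltnS ltn_ord.
Qed.

Lemma EU_mid (R : realFieldType) n L H (i : 'I_n) (beta : R) (p : 'I_H.+1) :
  (L < p)%N -> (p < H)%N ->
  bertrand_EU i p (@beta_profile R n L H beta) = beta ^+ n.-1 * (p : nat)%:R.
Proof.
move=> Lp pH.
pose s0 : {ffun 'I_n -> 'I_H.+1} := [ffun j => if j == i then p else ord_max].
have s0i : s0 i = p by rewrite ffunE eqxx.
have s0j : forall j, j != i -> s0 j = ord_max by move=> j /negbTE ji; rewrite ffunE ji.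
rewrite /bertrand_EU (bigD1 s0) /=; last by rewrite s0i.
rewrite [X in _ + X]big1 ?addr0.
  rewrite /bertrand_u ifT; last first.
    apply/forallP => j; rewrite s0i; case: (eqVneq j i) => [->|ji].
      by rewrite s0i.
    by rewrite s0j // -ltnS ltn_ord.
  rewrite (eq_bigr (fun _ => beta)); last first.
    by move=> j ji; rewrite s0j // /beta_profile /= eqxx.
  rewrite (prodr_const (predC1 i)) cardC1 card_ord.
  rewrite (_ : [set j | _] = [set i]); last first.
    apply/setP => j; rewrite !inE s0i; case: (eqVneq j i) => [->|ji].
      by rewrite s0i eqxx.
    rewrite s0j //; apply/negbTE; apply/eqP => /(congr1 val) /= e.
    by move: pH; rewrite -e ltnn.
  by rewrite cards1 s0i divr1.
move=> s /andP [/eqP si sne].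
rewrite /bertrand_u; case: ifP; last by rewrite mulr0.
move=> /forallP hmin.
have [j hj] : exists j, s j != s0 j.
  apply/existsP; rewrite -negb_forall; apply: contra sne => /forallP h.
  by apply/eqP/ffunP => j; apply/eqP/h.
have ji : j != i by apply: contraNneq hj => ->; rewrite si s0i.
rewrite (bigD1 j) //= {1}/beta_profile.
have sjH : (nat_of_ord (s j) == H) = false.
  apply/negbTE; apply: contra hj; rewrite s0j // => /eqP e.
have sjL : (nat_of_ord (s j) == L) = false.
  apply/negbTE; apply/eqP => e; have := hmin j; rewrite si e => h.
  by move: (leq_ltn_trans h Lp); rewrite ltnn.
by rewrite sjH sjL !mul0r.
Qed.

Lemma EU_L (R : realFieldType) n L H (i : 'I_n) (beta : R) (p : 'I_H.+1) :
  nat_of_ord p = L -> (L < H)%N ->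
  bertrand_EU i p (@beta_profile R n L H beta) = @f_n R n beta * L%:R.
Proof.
move=> pL LH.
have eqv : forall a b : 'I_H.+1, (a == b) = (nat_of_ord a == nat_of_ord b) by [].
have pM : (p == ord_max) = false by rewrite eqv /= pL; apply/negbTE; rewrite neq_ltn LH.
have wM : forall j, @beta_profile R n L H beta j ord_max = beta.
  by move=> j; rewrite /beta_profile /= eqxx.
have wp : forall j, @beta_profile R n L H beta j p = 1 - beta.
  by move=> j; rewrite /beta_profile pL eqxx; case: eqP => // e; move: LH; rewrite e ltnn.
rewrite /bertrand_EU (bigID (fun s : {ffun 'I_n -> 'I_H.+1} =>
   [forall j, (s j == p) || (s j == ord_max)])) /=.
rewrite [X in _ + X]big1 ?addr0; last first.
  move=> s /andP [/eqP si /forallPn [j]]; rewrite negb_or => /andP [hp hH].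
  have ji : j != i by apply: contraNneq hp => ->; rewrite si.
  rewrite (bigD1 j) //= {1}/beta_profile.
  move: hp hH; rewrite !eqv /= pL => /negbTE -> /negbTE ->.
  by rewrite !mul0r.
pose mk (T : {set 'I_n}) : {ffun 'I_n -> 'I_H.+1} :=
  [ffun j => if j \in T then ord_max else p].
have mkin : forall (T : {set 'I_n}) (j : 'I_n), j \in T -> mk T j = ord_max by move=> T j jT; rewrite ffunE jT.
have mkout : forall (T : {set 'I_n}) (j : 'I_n), j \notin T -> mk T j = p by move=> T j /negbTE jT; rewrite ffunE jT.
rewrite (reindex_onto mk (fun s => [set j | s j == ord_max])) /=; last first.
  move=> s /andP [_ /forallP h]; apply/ffunP => j; rewrite ffunE inE.
  by case: ifP => [/eqP //|/negbT hM]; move: (h j); rewrite (negbTE hM) orbF => /eqP.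
rewrite (eq_bigl (fun T : {set 'I_n} => i \notin T)); last first.
  move=> T; case: (boolP (i \in T)) => iT /=.
    by rewrite mkin // eq_sym pM.
  rewrite mkout // eqxx /=.
  have -> : [forall j, (mk T j == p) || (mk T j == ord_max)].
    apply/forallP => j; case: (boolP (j \in T)) => jT.
      by rewrite mkin // eqxx orbT.
    by rewrite mkout // eqxx.
  apply/eqP/setP => j; rewrite inE; case: (boolP (j \in T)) => jT.
    by rewrite mkin // eqxx.
  by rewrite mkout // pM.
rewrite (eq_bigr (fun T : {set 'I_n} => beta ^+ #|T| * (1 - beta) ^+ (n.-1 - #|T|)
   * (L%:R / (n - #|T|)%:R))); last first.
  move=> T iT.
  have arith : forall a b m : nat, (1 + a + b)%N = m -> b = (m - 1 - a)%N.
    by move=> a b m <-; rewrite -addnA !addKn.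
  have cT : (#|T| + #|~: T| = n)%N by rewrite cardsC card_ord.
  have cU : #|~: (i |: T)| = (n.-1 - #|T|)%N.
    move: (cardsC (i |: T)); rewrite cardsU1 card_ord; move: iT; case: (i \in T) => //= _; rewrite -subn1; apply: arith.
  congr (_ * _).
    rewrite (bigID (fun j => j \in T)) /=; congr (_ * _).
      rewrite (eq_big (fun j => j \in T) (fun _ => beta)) ?prodr_const //.
        move=> j; case: (boolP (j \in T)) => jT; rewrite ?andbT ?andbF //.
        by apply/eqP => e; move: iT; rewrite -e jT.
      by move=> j /andP [_ jT]; rewrite mkin // wM.
    rewrite (eq_big (fun j => j \in ~: (i |: T)) (fun _ => 1 - beta)) ?prodr_const ?cU //.
      by move=> j; rewrite !inE negb_or.
    by move=> j /andP [_ jT]; rewrite mkout // wp.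
  rewrite /bertrand_u ifT; last first.
    apply/forallP => j; rewrite (mkout T i iT); case: (boolP (j \in T)) => jT.
      by rewrite mkin // -ltnS ltn_ord.
    by rewrite mkout.
  rewrite (mkout T i iT) pL (_ : [set j | mk T j == p] = ~: T).
    by congr (_ / _%:R); apply: addsub cT.
  apply/setP => j; rewrite !inE; case: (boolP (j \in T)) => jT.
    by rewrite mkin // eq_sym pM.
  by rewrite mkout // eqxx.
set G := fun k : nat => beta ^+ k * (1 - beta) ^+ (n.-1 - k) * (L%:R / (n - k)%:R).
rewrite (eq_bigr (fun T : {set 'I_n} => \sum_(k < n) (if (k : nat) == #|T| then G k else 0))); last first.
  move=> T iT; rewrite -big_mkcond big_ord1_eq ifT //.
  have hc : (#|T| < #|'I_n|)%N.
    apply: proper_card; apply/properP; split; first by apply/subsetP.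
    by exists i.
  by rewrite card_ord in hc.
rewrite exchange_big /= /f_n big_distrl /=; apply: eq_bigr => k _.
rewrite -big_mkcondr /=.
rewrite (eq_bigl (fun T => T \in [set T : {set 'I_n} | T \subset [set~ i] & #|T| == k])); last first.
  move=> T; rewrite !inE eq_sym; congr (_ && _).
  apply/idP/idP => [iT|/subsetP h]; last by apply/negP => /h; rewrite !inE eqxx.
  apply/subsetP => j jT; rewrite !inE; apply/eqP => e; move: iT; rewrite -e jT.
  by [].
rewrite sumr_const cards_draws cardsC1 card_ord.
rewrite -mulr_natr /G.
by ring.
Qed.

Lemma fn_ge (R : realFieldType) n' (beta : R) : 0 <= beta -> beta <= 1 ->
  beta ^+ n' <= @f_n R n'.+1 beta.
Proof.
move=> b0 b1; rewrite /f_n (bigD1 ord_max) //= subnn expr0 binn subSnn divr1 !mulr1.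
rewrite lerDl; apply: sumr_ge0 => k _.
by rewrite divr_ge0 ?ler0n // !mulr_ge0 ?ler0n ?exprn_ge0 // subr_ge0.
Qed.

Theorem proposition3p4 (R : realFieldType) (n L H : nat) (i : 'I_n)
    (beta t : R) :
  (2 <= n)%N -> (2 <= L)%N -> (L < H)%N ->
  0 <= beta -> beta <= 1 -> 0 <= t ->
  @coop_consistent R n L H i t beta <->
  t >= Num.max (beta ^+ n.-1 * (H%:R - 1)) (@f_n R n beta * L%:R)
         - beta ^+ n.-1 * H%:R / n%:R.
Proof.
move=> n2 L2 LH b0 b1 t0.
rewrite /coop_consistent /consistent EU_H // lerBlDr ge_max.
case: n i n2 => [//|n'] i n2 /=.
have F1 : beta ^+ n' * L%:R <= @f_n R n'.+1 beta * L%:R.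
  by rewrite ler_wpM2r ?ler0n ?fn_ge.
have bn0 : 0 <= beta ^+ n' by rewrite exprn_ge0.
set EH := beta ^+ n' * H%:R / n'.+1%:R.
have LH1 : (L < H.+1)%N by rewrite ltnS ltnW.
split.
  move=> h; apply/andP; split; last first.
    have := h (inord L); rewrite inordK // leqnn EU_L ?inordK // => /(_ isT).
    by rewrite addrC.
  have [LH2|] := ltnP L H.-1.
    have hH1 : (H.-1 < H.+1)%N by rewrite ltnS leq_pred.
    have := h (inord H.-1); rewrite inordK // ltnW // EU_mid ?inordK //; last first.
      by rewrite prednK ?ltnn // (leq_ltn_trans _ LH).
    move=> /(_ isT); have eH : H = H.-1.+1 by rewrite prednK // (leq_ltn_trans _ LH).
    by rewrite [in X in _ -> X]eH -natr1 addrK /= addrC.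
  move=> HL; have eH : H = L.+1.
    by apply/eqP; rewrite eqn_leq LH andbT -(prednK (leq_ltn_trans (leq0n _) LH)) ltnS.
  have := h (inord L); rewrite inordK // leqnn EU_L ?inordK // => /(_ isT).
  rewrite addrC; apply: le_trans; apply: le_trans F1.
  by rewrite eH -natr1 addrK.
move=> /andP [ha hb] p' Lp'.
case: (ltngtP L p') Lp' => // [Lp _|e _]; last first.
  by rewrite (@EU_L R n'.+1 L H i beta p' (esym e)) // addrC.
case: (ltngtP p' H) => [pH|Hp|pH].
- rewrite EU_mid //; rewrite addrC; apply: le_trans ha.
  rewrite ler_wpM2l // lerBrDr natr1 ler_nat //.
- by move: (ltn_ord p'); rewrite ltnS leqNgt Hp.
- have -> : p' = ord_max by apply: val_inj.
  by rewrite EU_H // lerDl.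
Qed.
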